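(* Let $n\ge 1$ and let $b_1,\ldots,b_{2^n}\in\{0,1\}$ be such that the cyclic sequence $[b_1,\ldots,b_{2^n}]$ is a binary De Bruijn cycle of order $n$ (its $2^n$ cyclic windows of length $n$ are all distinct). For a seed $(z_1,z_2)\in\{0,1\}^2$ define $z_i=b_{i-2}+z_{i-1}+z_{i-2}\pmod 2$ for $i=3,\ldots,2^n+2$, and let $\mathcal{D}(z_1z_2)=z_{2^n+1}z_{2^n+2}$. Then $\mathcal{D}$ is a permutation of $\{00,01,10,11\}$ with exactly one fixed point $z_1z_2$, given by $$z_1=a_0+\delta_{\tilde n,0}\,a_1+\delta_{\tilde n,1}\,a_2,\qquad z_2=a_1+\delta_{\tilde n,0}\,a_2+\delta_{\tilde n,1}\,a_0\pmod 2,$$ where $\tilde n=n\bmod 2$, $\delta$ is the Kronecker delta, and $a_j=\sum_i b_{3i+j}\bmod 2$ for $j=0,1,2$, the sum running over all integers $i$ with $1\le 3i+j\le 2^n$. Consequently, the preimage of this De Bruijn cycle under the homomorphism $B_{n+2}\to B_n$ induced by $d(x_1,x_2,x_3)=x_1+x_2+x_3$ consists of exactly two vertex-disjoint cycles in $B_{n+2}$: one of length $2^n$ (started at the fixed seed) and one of length $3\cdot 2^n$ (formed by the other three seeds).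
   Context: $B_m$ denotes the binary De Bruijn digraph with vertex set $\{0,1\}^m$ and an edge from $(x_1,\ldots,x_m)$ to $(y_1,\ldots,y_m)$ iff $y_i=x_{i+1}$ for $i<m$. The homomorphism induced by $d$ sends $(x_1,\ldots,x_{n+2})$ to $(d(x_1,x_2,x_3),\ldots,d(x_n,x_{n+1},x_{n+2}))$. The sequence $z_1,\ldots,z_{2^n+2}$ is the preimage path of the cycle started from the seed $z_1z_2$, i.e. $d(z_j,z_{j+1},z_{j+2})=b_j$ for $j=1,\ldots,2^n$. *)

(* Defs.v *)
From mathcomp Require Import all_boot.
Set Implicit Arguments. Unset Strict Implicit. Unset Printing Implicit Defensive.

(* Convention: b : nat -> bool is read 1-indexed; only b 1, ..., b (2^n)
   matter.  Addition mod 2 on {0,1} is boolean xor (addb, notation (+)). *)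

Definition window (n : nat) (b : nat -> bool) (i : nat) : seq bool :=
  [seq b ((i.-1 + k) %% 2 ^ n).+1 | k <- iota 0 n].

Definition debruijn_cycle (n : nat) (b : nat -> bool) : Prop :=
  forall i j, 1 <= i <= 2 ^ n -> 1 <= j <= 2 ^ n ->
    window n b i = window n b j -> i = j.

(* zpair b s k = (z_{k+1}, z_{k+2}) for seed s = (z_1, z_2), with
   z_i = b_{i-2} + z_{i-1} + z_{i-2} (mod 2). *)
Fixpoint zpair (b : nat -> bool) (s : bool * bool) (k : nat) : bool * bool :=
  match k with
  | 0 => s
  | k'.+1 => let: (x, y) := zpair b s k' in (y, b k'.+1 (+) y (+) x)
  end.

Definition zval (b : nat -> bool) (s : bool * bool) (i : nat) : bool :=
  (zpair b s i.-1).1.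

Definition Dmap (n : nat) (b : nat -> bool) (s : bool * bool) : bool * bool :=
  zpair b s (2 ^ n).

Definition acoef (n : nat) (b : nat -> bool) (j : nat) : bool :=
  \big[addb/false]_(1 <= k < (2 ^ n).+1 | k %% 3 == j) b k.

Definition kdelta (x y : nat) : bool := x == y.

Definition bruijn_vertex (m : nat) (x : seq bool) : bool := size x == m.
Definition bruijn_edge (m : nat) (x y : seq bool) : bool :=
  [&& size x == m, size y == m & behead x == take m.-1 y].

Definition dhom (x : seq bool) : seq bool :=
  [seq nth false x k (+) nth false x k.+1 (+) nth false x k.+2
  | k <- iota 0 (size x - 2)].

Definition cyc_vertex (n : nat) (b : nat -> bool) (u : seq bool) : Prop :=
  exists2 i, 1 <= i <= 2 ^ n & u = window n b i.
Definition cyc_edge (n : nat) (b : nat -> bool) (u v : seq bool) : Prop :=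
  exists2 i, 1 <= i <= 2 ^ n &
    u = window n b i /\ v = window n b ((i %% 2 ^ n).+1).

Definition pre_vertex (n : nat) (b : nat -> bool) (x : seq bool) : Prop :=
  bruijn_vertex (n + 2) x /\ cyc_vertex n b (dhom x).
Definition pre_edge (n : nat) (b : nat -> bool) (x y : seq bool) : Prop :=
  bruijn_edge (n + 2) x y /\ cyc_edge n b (dhom x) (dhom y).

Definition seq_cycle_edge (c : seq (seq bool)) (x y : seq bool) : bool :=
  (x \in c) && (next c x == y).

(* The vertex (z_1, ..., z_{n+2}) of B_{n+2} from which the preimage path of
   seed s starts. *)
Definition start_vertex (n : nat) (b : nat -> bool) (s : bool * bool) :=
  [seq zval b s i | i <- iota 1 (n + 2)].

Definition fixed_seed (n : nat) (b : nat -> bool) : bool * bool :=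
  let a := acoef n b in
  (a 0 (+) (kdelta (n %% 2) 0 && a 1) (+) (kdelta (n %% 2) 1 && a 2),
   a 1 (+) (kdelta (n %% 2) 0 && a 2) (+) (kdelta (n %% 2) 1 && a 0)).

(* Main.v *)
Require Import Defs.
From mathcomp Require Import all_boot.
Set Implicit Arguments. Unset Strict Implicit. Unset Printing Implicit Defensive.

Definition Ag (b : nat -> bool) (N j : nat) : bool :=
  \big[addb/false]_(1 <= k < N.+1 | k %% 3 == j) b k.

Definition mpow (r : nat) (s : bool * bool) : bool * bool :=
  match r with 0 => s | 1 => (s.2, s.1 (+) s.2) | _ => (s.1 (+) s.2, s.1) end.

Definition zform b s N :=
  let r := N %% 3 in
  (Ag b N ((r+1) %% 3) (+) Ag b N ((r+2) %% 3) (+) (mpow r s).1,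
   Ag b N r (+) Ag b N ((r+2) %% 3) (+) (mpow r s).2).

Lemma Ag_S b N j : Ag b N.+1 j = Ag b N j (+) ((N.+1 %% 3 == j) && b N.+1).
Proof.
rewrite /Ag big_mkcond /= big_nat_recr //= -big_mkcond /=.
by case: (_ == _) => //=; rewrite addbF.
Qed.

Lemma zpair_form b s N : zpair b s N = zform b s N.
Proof.
case: s => x y.
elim: N => [|N IH].
  by rewrite /zform /Ag !big_geq.
rewrite /= IH {IH} /zform !Ag_S.
have -> : N.+1 %% 3 = (N %% 3 + 1) %% 3 by rewrite modnDml addn1.
have : N %% 3 < 3 by rewrite ltn_mod.
case: (N %% 3) => [|[|[|r]]] //= _;
  by case: (Ag b N 0); case: (Ag b N 1); case: (Ag b N 2); case: (b N.+1); case: x; case: y.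
Qed.

Lemma exp2mod3 n : 2 ^ n %% 3 = if odd n then 2 else 1.
Proof.
elim: n => // n IH.
rewrite expnS -modnMmr IH /=; by case: (odd n).
Qed.

Definition Dexp (o a0 a1 a2 : bool) (s : bool * bool) : bool * bool :=
  if o then (a0 (+) a1 (+) (s.1 (+) s.2), a2 (+) a1 (+) s.1)
  else (a2 (+) a0 (+) s.2, a1 (+) a0 (+) (s.1 (+) s.2)).

Lemma Dform n b s : Dmap n b s =
  Dexp (odd n) (acoef n b 0) (acoef n b 1) (acoef n b 2) s.
Proof.
rewrite /Dmap zpair_form /zform exp2mod3 /Dexp.
by case: (odd n) => /=.
Qed.

Definition fexp (o a0 a1 a2 : bool) : bool * bool :=
  (a0 (+) (~~ o && a1) (+) (o && a2), a1 (+) (~~ o && a2) (+) (o && a0)).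

Lemma fixed_form n b : fixed_seed n b =
  fexp (odd n) (acoef n b 0) (acoef n b 1) (acoef n b 2).
Proof. by rewrite /fixed_seed /kdelta modn2 /fexp; case: (odd n). Qed.

Definition gexp o a0 a1 a2 := let f := fexp o a0 a1 a2 in (~~ f.1, f.2).

Section Brute.
Variables o a0 a1 a2 : bool.
Let D := Dexp o a0 a1 a2.
Let f := fexp o a0 a1 a2.
Let g := gexp o a0 a1 a2.

Lemma bf_fix s : D s = s <-> s = f.
Proof.
rewrite /D /f; case: s => x y; split => [|->].
  by case: o a0 a1 a2 x y => [] [] [] [] [] [] //=.
by case: o a0 a1 a2 => [] [] [] [].
Qed.

Lemma bf_D3 s : D (D (D s)) = s.
Proof. rewrite /D; case: s => x y; by case: o a0 a1 a2 x y => [] [] [] [] [] []. Qed.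

Lemma bf_cover t : t <> f -> t = g \/ t = D g \/ t = D (D g).
Proof.
rewrite /D /f /g; case: t => x y.
by case: o a0 a1 a2 x y => [] [] [] [] [] []; auto.
Qed.

Lemma bf_notf q : q < 3 -> iter q D g <> f.
Proof.
rewrite /D /f /g; case: q => [|[|[|q]]] //= _;
  by case: o a0 a1 a2 => [] [] [] [].
Qed.

Lemma bf_inj q q' : q < 3 -> q' < 3 -> iter q D g = iter q' D g -> q = q'.
Proof.
rewrite /D /g; case: q => [|[|[|q]]] //= _; case: q' => [|[|[|q']]] //= _;
  by case: o a0 a1 a2 => [] [] [] [].
Qed.
End Brute.

Section Graph.
Variables (n : nat) (b : nat -> bool).
Hypothesis hn : 1 <= n.
Hypothesis hdb : debruijn_cycle n b.

Let N := 2 ^ n.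
Lemma N_gt0 : 0 < N. Proof. by rewrite expn_gt0. Qed.

Definition bc (m : nat) : bool := b ((m.-1 %% N).+1).
Definition zz s m := zpair bc s m.
Definition P s k : seq bool := mkseq (fun j => (zz s (k + j)).1) (n + 2).
Let D := Dmap n b.

Lemma zzS s m : zz s m.+1 = ((zz s m).2, bc m.+1 (+) (zz s m).2 (+) (zz s m).1).
Proof. by rewrite /zz /=; case: (zpair bc s m). Qed.

Lemma zz_agree s m : m <= N -> zpair b s m = zz s m.
Proof.
elim: m => // m IH hm.
rewrite zzS -IH ?(ltnW hm) //= /bc /= modn_small //.
by case: (zpair b s m).
Qed.

Lemma zz_N s : zz s N = D s.
Proof. by rewrite -zz_agree. Qed.

Lemma zz_shift s m : zz s (m + N) = zz (D s) m.
Proof.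
elim: m => [|m IH]; first by rewrite add0n zz_N.
rewrite addSn !zzS IH; congr (_, _ (+) _ (+) _).
by rewrite /bc /= modnDr.
Qed.

Lemma zz_shiftq s q m : zz s (q * N + m) = zz (iter q D s) m.
Proof.
elim: q s m => [|q IH] s m; first by rewrite mul0n add0n.
by rewrite mulSn [N + _]addnC -addnA [N + m]addnC IH zz_shift iterS.
Qed.

Lemma P_shift s q m : P s (q * N + m) = P (iter q D s) m.
Proof.
apply: eq_mkseq => j; by rewrite -addnA zz_shiftq.
Qed.

Lemma P_norm s r : P s r = P (iter (r %/ N) D s) (r %% N).
Proof. by rewrite {1}(divn_eq r N) P_shift. Qed.

Lemma zz_inj m : injective (zz ^~ m).
Proof.
elim: m => [|m IH] s t /=; first by [].
rewrite !zzS => -[e1 e2]; apply: IH.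
move: e1 e2; case: (zz s m) => x y; case: (zz t m) => x' y' /= -> .
by case: (bc m.+1); case: y'; case: x; case: x' => //.
Qed.

Lemma zz_surj m u : exists s, zz s m = u.
Proof.
have [h hK Kh] := injF_bij (@zz_inj m).
by exists (h u); rewrite Kh.
Qed.

Lemma size_P s k : size (P s k) = n + 2.
Proof. by rewrite size_mkseq. Qed.

Lemma nth_P s k j : j < n + 2 -> nth false (P s k) j = (zz s (k + j)).1.
Proof. by move=> hj; rewrite nth_mkseq. Qed.

Lemma nth_dhom x j : j < size x - 2 ->
  nth false (dhom x) j = nth false x j (+) nth false x j.+1 (+) nth false x j.+2.
Proof. by move=> hj; rewrite /dhom (nth_map 0) ?size_iota // nth_iota. Qed.

Lemma dhomP s k : dhom (P s k) = window n b ((k %% N).+1).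
Proof.
rewrite /dhom /window size_P addnK; apply/eq_in_map => j.
rewrite mem_iota add0n => /andP [_ hj].
have h0 : j < n + 2 by rewrite addn2 ltnS ltnW // ltnW.
have h1 : j.+1 < n + 2 by rewrite addn2 ltnS ltnW.
have h2 : j.+2 < n + 2 by rewrite addn2.
rewrite !nth_P //.
rewrite !addnS !zzS /= /bc /= modnDml.
by case: (zz s (k + j)) => x y /=; case: x; case: y; case: (b _).
Qed.

Lemma list_uniq x y : size x = n + 2 -> size y = n + 2 ->
  nth false x 0 = nth false y 0 -> nth false x 1 = nth false y 1 ->
  dhom x = dhom y -> x = y.
Proof.
move=> sx sy e0 e1 ed.
have key : forall j, j.+1 < n + 2 ->
    nth false x j = nth false y j /\ nth false x j.+1 = nth false y j.+1.
  elim=> [|j IH] hj; first by [].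
  have [IH1 IH2] := IH (ltnW hj); split=> //.
  have hj' : j < size x - 2 by rewrite sx addn2 subn2 /=; rewrite addn2 in hj.
  have hj'' : j < size y - 2 by rewrite sy -sx.
  have := nth_dhom hj'; rewrite ed nth_dhom // IH1 IH2.
  by case: (nth false x j.+2); case: (nth false y j.+2); case: (nth false y j); case: (nth false y j.+1); case: (nth false (dhom y) j).
apply: (eq_from_nth (x0 := false)); first by rewrite sx sy.
move=> [|i]; first by [].
by rewrite sx => hi; case: (key i hi).
Qed.

Lemma win_inj k l : window n b ((k %% N).+1) = window n b ((l %% N).+1) ->
  k %% N = l %% N.
Proof.
move=> e; have h : forall m, 1 <= (m %% N).+1 <= 2 ^ n by move=> m; rewrite /= ltn_mod N_gt0.
by case: (hdb (h k) (h l) e).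
Qed.

Lemma P_inj s t r r' : r < N -> r' < N -> P s r = P t r' -> s = t /\ r = r'.
Proof.
move=> hr hr' e.
have er : r = r'.
  by have := congr1 dhom e; rewrite !dhomP => /win_inj; rewrite !modn_small.
subst r'; split=> //.
apply: (@zz_inj r).
have := congr1 (nth false ^~ 0) e; rewrite /= !nth_P ?addn2 // !addn0 => e0.
have := congr1 (nth false ^~ 1) e; rewrite /= !nth_P ?addn2 // !addn1 !zzS /= => e1.
by move: e0 e1; case: (zz s r) => ? ?; case: (zz t r) => ? ? /= -> ->.
Qed.

Lemma pre_vertexP x : pre_vertex n b x <-> exists t r, r < N /\ x = P t r.
Proof.
split.
  move=> [/eqP sx [i /andP [hi1 hi2] ex]].
  have [t ht] := zz_surj i.-1 (nth false x 0, nth false x 1).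
  exists t, i.-1; split; first by rewrite prednK.
  apply: list_uniq; rewrite ?size_P //.
  - by rewrite nth_P ?addn2 // addn0 ht.
  - by rewrite nth_P ?addn2 // addn1 zzS ht.
  - by rewrite dhomP ex modn_small ?prednK.
move=> [t [r [hr ->]]]; split; first by rewrite /bruijn_vertex size_P.
exists (r %% N).+1; first by rewrite /= ltn_mod N_gt0.
by rewrite dhomP.
Qed.

Lemma pre_edgeP x y : pre_edge n b x y <-> exists t r, x = P t r /\ y = P t r.+1.
Proof.
split.
  move=> [/and3P [/eqP sx /eqP sy /eqP eb] [i /andP [hi1 hi2] [ex ey]]].
  have [t ht] := zz_surj i.-1 (nth false x 0, nth false x 1).
  have xP : x = P t i.-1.
    apply: list_uniq; rewrite ?size_P //.
    - by rewrite nth_P ?addn2 // addn0 ht.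
    - by rewrite nth_P ?addn2 // addn1 zzS ht.
    - by rewrite dhomP ex modn_small ?prednK.
  exists t, i.-1; split=> //; rewrite prednK //.
  rewrite addn2 /= in eb.
  apply: list_uniq; rewrite ?size_P //.
  - rewrite nth_P ?addn2 // addn0 -(nth_take _ (ltn0Sn n)) -eb nth_behead xP.
    by rewrite nth_P ?addn2 // addn1 prednK.
  - have h1 : 1 < n.+1 by rewrite ltnS.
    rewrite nth_P ?addn2 // addn1 -(nth_take _ h1) -eb nth_behead xP.
    by rewrite nth_P ?addn2 // prednK.
  - by rewrite (dhomP t i) ey.
move=> [t [r [-> ->]]]; split.
  rewrite /bruijn_edge !size_P eqxx /= addn2 /=.
  apply/eqP; apply: (eq_from_nth (x0 := false)); first by rewrite size_behead size_take !size_P addn2 ltnSn.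
  rewrite size_behead size_P addn2 /= => j hj.
  rewrite nth_behead nth_take // !nth_P ?addn2 ?ltnS //. by rewrite addSn addnS.
  by apply: ltnW.
exists (r %% N).+1; first by rewrite /= ltn_mod N_gt0.
have e : (r %% N).+1 %% N = r.+1 %% N by rewrite -[(r %% N).+1]addn1 -[r.+1]addn1 modnDml.
by rewrite !dhomP; split=> //; rewrite e.
Qed.

Lemma next_mkseq (F : nat -> seq bool) L k :
  uniq (mkseq F L) -> F L = F 0 -> k < L ->
  F k \in mkseq F L /\ next (mkseq F L) (F k) = F k.+1.
Proof.
move=> u e hk.
have mem : F k \in mkseq F L by apply/mapP; exists k => //; rewrite mem_iota.
split=> //; rewrite next_nth mem.
have ix : index (F k) (mkseq F L) = k.
  by rewrite -{1}(nth_mkseq [::] F hk) index_uniq ?size_mkseq.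
case: L u e hk mem ix => // L u e hk mem ix.
rewrite ix /mkseq /=.
have hk' : k <= L by [].
rewrite leq_eqVlt in hk'; case/orP: hk' => [/eqP ->|hkl].
  by rewrite nth_default ?size_map ?size_iota // e.
by rewrite (nth_map 0) ?size_iota // nth_iota // add1n.
Qed.

Let o := odd n.
Let A0 := acoef n b 0.
Let A1 := acoef n b 1.
Let A2 := acoef n b 2.
Let f := fixed_seed n b.
Let g := gexp o A0 A1 A2.
Let DE := Dexp o A0 A1 A2.

Lemma iterDE q s : iter q D s = iter q DE s.
Proof. apply: eq_iter => t; exact: Dform. Qed.

Lemma fE : f = fexp o A0 A1 A2.
Proof. exact: fixed_form. Qed.

Lemma Df : D f = f.
Proof. by rewrite /D Dform fE; apply/(bf_fix (odd n) A0 A1 A2). Qed.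

Definition c1 := mkseq (P f) N.
Definition c2 := mkseq (P g) (3 * N).

Lemma mem_mk (F : nat -> seq bool) L x : x \in mkseq F L -> exists2 k, k < L & x = F k.
Proof. by case/mapP => k; rewrite mem_iota add0n => /andP [_ hk] ->; exists k. Qed.

Lemma c2_norm k : k < 3 * N -> exists q r, [/\ q < 3, r < N & P g k = P (iter q D g) r].
Proof.
move=> hk; exists (k %/ N), (k %% N); split.
- by rewrite ltn_divLR ?N_gt0.
- by rewrite ltn_mod N_gt0.
- exact: P_norm.
Qed.

Lemma uniq_c1 : uniq c1.
Proof.
rewrite /c1 /mkseq map_inj_in_uniq ?iota_uniq // => k l.
rewrite !mem_iota !add0n => /andP [_ hk] /andP [_ hl] e.
by case: (P_inj hk hl e).
Qed.

Lemma uniq_c2 : uniq c2.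
Proof.
rewrite /c2 /mkseq map_inj_in_uniq ?iota_uniq // => k l.
rewrite !mem_iota !add0n => /andP [_ hk] /andP [_ hl] e.
have hq : forall m, m < 3 * N -> m %/ N < 3 by move=> m hm; rewrite ltn_divLR ?N_gt0.
rewrite (P_norm g k) (P_norm g l) in e.
have lm : forall m, m %% N < N by move=> m; rewrite ltn_mod N_gt0.
have [e1 e2] := P_inj (lm k) (lm l) e.
rewrite !iterDE in e1.
have eq := bf_inj (hq _ hk) (hq _ hl) e1.
by rewrite (divn_eq k N) (divn_eq l N) eq e2.
Qed.

Lemma c1_c2 k l : k < N -> l < 3 * N -> P f k <> P g l.
Proof.
move=> hk hl e.
have [q [r [hq hr e']]] := c2_norm hl.
rewrite e' in e; have [e1 _] := P_inj hk hr e.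
by apply: (@bf_notf o A0 A1 A2 q hq); rewrite -iterDE -e1 fE.
Qed.

Lemma uniq_c12 : uniq (c1 ++ c2).
Proof.
rewrite cat_uniq uniq_c1 uniq_c2 /= andbT.
apply/hasPn => x /mem_mk [l hl ->]; apply/negP => /mem_mk [k hk e].
exact: (c1_c2 hk hl (esym e)).
Qed.

Lemma c1_loop : P f N = P f 0.
Proof. by rewrite -[N]addn0 -{1}[N]mul1n P_shift /= Df. Qed.

Lemma c2_loop : P g (3 * N) = P g 0.
Proof.
rewrite -[3 * N]addn0 P_shift iterDE.
congr P; exact: bf_D3.
Qed.

Lemma inC t r : r < N ->
  (t = f -> P t r \in c1 /\ next c1 (P t r) = P t r.+1) /\
  (t <> f -> P t r \in c2 /\ next c2 (P t r) = P t r.+1).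
Proof.
move=> hr; split=> [->|hf].
  exact: (next_mkseq uniq_c1 c1_loop hr).
have [q [hq ->]] : exists q, q < 3 /\ t = iter q D g.
  rewrite fE in hf.
  case: (bf_cover hf) => [->|[->|->]]; [exists 0|exists 1|exists 2];
    by rewrite iterDE.
have hk : q * N + r < 3 * N.
  apply: (@leq_trans (q.+1 * N)); first by rewrite mulSn [N + _]addnC ltn_add2l.
  by rewrite leq_mul2r hq orbT.
rewrite -!P_shift addnS.
exact: (next_mkseq uniq_c2 c2_loop hk).
Qed.

Lemma startP s : start_vertex n b s = P s 0.
Proof.
apply: (eq_from_nth (x0 := false)); first by rewrite size_map size_iota size_P.
rewrite size_map size_iota => j hj.
rewrite (nth_map 0) ?size_iota // nth_iota // nth_P // add0n /zval add1n /=.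
apply/f_equal/zz_agree.
have : n < N by apply: ltn_expl.
by rewrite addn2 ltnS in hj; apply: leq_trans.
Qed.

Lemma main_sec : bijective D /\ (forall s, D s = s <-> s = f) /\
  exists c1 c2 : seq (seq bool),
    size c1 = 2 ^ n /\ size c2 = 3 * 2 ^ n /\ uniq (c1 ++ c2) /\
    head [::] c1 = start_vertex n b f /\
    (forall s, s <> f -> start_vertex n b s \in c2) /\
    (forall x, x \in c1 ++ c2 <-> pre_vertex n b x) /\
    (forall x y, pre_edge n b x y <->
       seq_cycle_edge c1 x y \/ seq_cycle_edge c2 x y).
Proof.
split.
  exists (D \o D) => s /=; rewrite /D !Dform; exact: bf_D3.
split.
  by move=> s; rewrite /D Dform fE; apply: bf_fix.
exists c1, c2; split; first by rewrite size_mkseq.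
split; first by rewrite size_mkseq.
split; first exact: uniq_c12.
split.
  rewrite startP /c1 /mkseq; have := N_gt0; rewrite /N.
  by case: (2 ^ n).
split.
  by move=> s hs; rewrite startP; case: (inC s N_gt0) => _ /(_ hs) [].
split.
  move=> x; split.
    move=> hx; apply/pre_vertexP; move: hx; rewrite mem_cat => /orP [] /mem_mk [k hk ->].
      by exists f, k.
    have [q [r [_ hr ->]]] := c2_norm hk; by exists (iter q D g), r.
  move/pre_vertexP=> [t [r [hr ->]]]; rewrite mem_cat.
  case: (t =P f) => hf; have [h1 h2] := inC t hr.
    by case: (h1 hf) => ->.
  by case: (h2 hf) => ->; rewrite orbT.
move=> x y; rewrite /seq_cycle_edge; split.
  move/pre_edgeP=> [t [r [-> ->]]].
  have e2 : P t r.+1 = P (iter (r %/ N) D t) (r %% N).+1.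
    by rewrite -P_shift addnS -divn_eq.
  rewrite e2 (P_norm t r).
  have hm : r %% N < N by rewrite ltn_mod N_gt0.
  have [h1 h2] := inC (iter (r %/ N) D t) hm.
  case: (iter (r %/ N) D t =P f) => hf.
    by case: (h1 hf) => -> ->; left; rewrite eqxx.
  by case: (h2 hf) => -> ->; right; rewrite eqxx.
move=> hxy; apply/pre_edgeP; move: hxy.
move=> [] /andP [] /mem_mk [k hk ->] /eqP <-.
  have [_ ->] := next_mkseq uniq_c1 c1_loop hk; by exists f, k.
have [_ ->] := next_mkseq uniq_c2 c2_loop hk; by exists g, k.
Qed.
End Graph.

Theorem mainTheorem5 (n : nat) (b : nat -> bool) :
  1 <= n -> debruijn_cycle n b ->
  bijective (Dmap n b) /\
  (forall s, Dmap n b s = s <-> s = fixed_seed n b) /\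
  exists c1 c2 : seq (seq bool),
    size c1 = 2 ^ n /\ size c2 = 3 * 2 ^ n /\ uniq (c1 ++ c2) /\
    head [::] c1 = start_vertex n b (fixed_seed n b) /\
    (forall s, s <> fixed_seed n b -> start_vertex n b s \in c2) /\
    (forall x, x \in c1 ++ c2 <-> pre_vertex n b x) /\
    (forall x y, pre_edge n b x y <->
       seq_cycle_edge c1 x y \/ seq_cycle_edge c2 x y).
Proof. move=> hn hdb; exact: (main_sec hn hdb). Qed.
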